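(* Let $f_1,f_2$ be the circle rotations by angles $\alpha,\beta\in\mathbb{R}\setminus\mathbb{Q}$ respectively, with $\beta-\alpha\in\mathbb{Q}$. Let $\mathscr{F}=\{f_1,f_2\}$ and $\Phi=\tau\ltimes\mathscr{F}$ on $\Sigma_2\times\mathbb{S}^1$. Then (1) $\mathscr{F}$ is minimal; (2) $\mathbb{S}^1$ is not a strict attractor of $\mathscr{F}$; (3) the strong unstable foliation $\mathcal{F}^{uu}(\Phi)$ is not minimal.
   Context: $\mathbb{S}^1=\mathbb{R}/\mathbb{Z}$. $\mathscr{F}$ is minimal if $\{h(x):h\in\langle\mathscr{F}\rangle^+\}$ is dense for every $x$ ($\langle\mathscr{F}\rangle^+$ = semigroup of finite compositions). $\mathbb{S}^1$ is a strict attractor of $\mathscr{F}$ if $F^n(S)\to\mathbb{S}^1$ in the Hausdorff metric for every nonempty compact $S$, where $F(A)=f_1(A)\cup f_2(A)$. $\Sigma_2=\{1,2\}^{\mathbb{Z}}$ with metric $\nu^m$, $m=\min\{i\geq0:\omega_i\ne\omega'_i\text{ or }\omega_{-i}\ne\omega'_{-i}\}$, $0<\nu<1$; $\tau$ the shift; $\Phi(\omega,x)=(\tau\omega,f_{\omega_0}(x))$. $W^u_{loc}(\omega)=\{\omega':\omega'_i=\omega_i\ \forall i<0\}$, $W^{uu}(\omega,x)=\bigcup_{n\geq0}\Phi^n(W^u_{loc}(\tau^{-n}\omega)\times\{\pi(\Phi^{-n}(\omega,x))\})$ with $\pi$ the projection to $\mathbb{S}^1$; $\mathcal{F}^{uu}(\Phi)$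 is minimal if every such leaf is dense in $\Sigma_2\times\mathbb{S}^1$. *)

(* Defs.v *)
From Stdlib Require Import Reals Lra ZArith List ClassicalEpsilon.
Open Scope R_scope.

(* ---------- The circle S^1 = R/Z, points represented by real lifts ---------- *)

Definition circ_eq (x y : R) : Prop := exists k : Z, x = y + IZR k.

(* the quotient metric on R/Z: distance to the nearest integer of x - y *)
Definition cdist (x y : R) : R :=
  Rmin (frac_part (x - y)) (1 - frac_part (x - y)).

(* subsets of S^1 are represented by Z-saturated subsets of R *)
Definition circ_set (A : R -> Prop) : Prop :=
  forall x (k : Z), A x -> A (x + IZR k).

(* compactness of a subset of S^1 (sequential compactness in the metric cdist) *)
Definition circ_compact (A : R -> Prop) : Prop :=
  forall u : nat -> R, (forall n, A (u n)) ->
    exists (phi : nat -> nat) (y : R),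
      (forall n, (phi n < phi (S n))%nat) /\ A y /\
      (forall eps, 0 < eps -> exists N, forall n, (N <= n)%nat ->
         cdist (u (phi n)) y < eps).

Definition circ_dense (A : R -> Prop) : Prop :=
  forall y eps, 0 < eps -> exists x, A x /\ cdist x y < eps.

Definition hausdorff_lt (A B : R -> Prop) (eps : R) : Prop :=
  (forall x, A x -> exists y, B y /\ cdist x y < eps) /\
  (forall y, B y -> exists x, A x /\ cdist x y < eps).

Definition circT : R -> Prop := fun _ => True.

Definition is_rational (r : R) : Prop :=
  exists (p q : Z), q <> 0%Z /\ r = IZR p / IZR q.

Inductive sym : Type := one | two.

Definition rot (a x : R) : R := x + a.

Definition fam (alpha beta : R) (s : sym) : R -> R :=
  match s with one => rot alpha | two => rot beta end.
Definition fam_inv (alpha beta : R) (s : sym) : R -> R :=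
  match s with one => rot (- alpha) | two => rot (- beta) end.

Definition word_apply (F : sym -> R -> R) (w : list sym) (x : R) : R :=
  fold_right (fun s y => F s y) x w.

Definition semigroup_orbit (F : sym -> R -> R) (x : R) : R -> Prop :=
  fun y => exists w : list sym, w <> nil /\ y = word_apply F w x.

Definition IFS_minimal (F : sym -> R -> R) : Prop :=
  forall x, circ_dense (semigroup_orbit F x).

Definition hutch (F : sym -> R -> R) (A : R -> Prop) : R -> Prop :=
  fun y => exists s x, A x /\ circ_eq y (F s x).

Definition strict_attractor (F : sym -> R -> R) : Prop :=
  forall S : R -> Prop, circ_set S -> (exists x, S x) -> circ_compact S ->
    forall eps, 0 < eps -> exists N : nat, forall n, (N <= n)%nat ->
      hausdorff_lt (Nat.iter n (hutch F) S) circT eps.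

Definition Sigma2 : Type := Z -> sym.

Definition differ_at (w w' : Sigma2) (m : nat) : Prop :=
  w (Z.of_nat m) <> w' (Z.of_nat m) \/ w (- Z.of_nat m)%Z <> w' (- Z.of_nat m)%Z.

(* d(w,w') = nu^m, m = min{i >= 0 : w_i <> w'_i or w_{-i} <> w'_{-i}}; 0 if w = w' *)
Definition sdist (nu : R) (w w' : Sigma2) : R :=
  match excluded_middle_informative (exists m, differ_at w w' m) with
  | left _ => nu ^ (epsilon (inhabits 0%nat)
                      (fun m => differ_at w w' m /\
                                forall k, (k < m)%nat -> ~ differ_at w w' k))
  | right _ => 0
  end.

Definition tau (w : Sigma2) : Sigma2 := fun i => w (i + 1)%Z.
Definition tau_inv (w : Sigma2) : Sigma2 := fun i => w (i - 1)%Z.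

Definition Phi (alpha beta : R) (p : Sigma2 * R) : Sigma2 * R :=
  (tau (fst p), fam alpha beta (fst p 0%Z) (snd p)).
Definition Phi_inv (alpha beta : R) (p : Sigma2 * R) : Sigma2 * R :=
  (tau_inv (fst p), fam_inv alpha beta (fst p (-1)%Z) (snd p)).

Definition Wu_loc (w : Sigma2) : Sigma2 -> Prop :=
  fun w' => forall i : Z, (i < 0)%Z -> w' i = w i.

Definition Wuu (alpha beta : R) (p : Sigma2 * R) : Sigma2 * R -> Prop :=
  fun q => exists (n : nat) (w' : Sigma2),
    Wu_loc (Nat.iter n tau_inv (fst p)) w' /\
    q = Nat.iter n (Phi alpha beta)
          (w', snd (Nat.iter n (Phi_inv alpha beta) p)).

(* density in Sigma2 x S^1 (max of the two metrics) *)
Definition prod_dense (nu : R) (A : Sigma2 * R -> Prop) : Prop :=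
  forall (w : Sigma2) (y eps : R), 0 < eps ->
    exists q, A q /\ sdist nu (fst q) w < eps /\ cdist (snd q) y < eps.

Definition uu_minimal (nu alpha beta : R) : Prop :=
  forall p : Sigma2 * R, prod_dense nu (Wuu alpha beta p).

(* Main.v *)
Require Import Defs.
From Stdlib Require Import Reals Lra Lia ZArith List Classical.
Open Scope R_scope.

Lemma IP_spec r : IZR (Int_part r) <= r < IZR (Int_part r) + 1.
Proof. destruct (base_Int_part r); lra. Qed.

Lemma cdist_le x y (m : Z) : cdist x y <= Rabs (x - y - IZR m).
Proof.
  unfold cdist, frac_part. set (d := x - y).
  destruct (IP_spec d) as [H1 H2].
  destruct (Z.le_gt_cases m (Int_part d)) as [Hm|Hm].
  - apply IZR_le in Hm. apply Rle_trans with (d - IZR (Int_part d)); [apply Rmin_l|].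
    rewrite Rabs_right; lra.
  - assert (IZR (Int_part d) + 1 <= IZR m). { rewrite <- plus_IZR. apply IZR_le. lia. }
    apply Rle_trans with (1 - (d - IZR (Int_part d))); [apply Rmin_r|].
    rewrite Rabs_left1; lra.
Qed.

Lemma cdist_ge x y (Q j : Z) : (0 < Q)%Z ->
  (x - y) * (2 * IZR Q) = IZR (2 * j + 1) -> / (2 * IZR Q) <= cdist x y.
Proof.
  intros HQ Heq. unfold cdist, frac_part. set (d := x - y) in *.
  destruct (IP_spec d) as [H1 H2].
  set (z := Int_part d) in *.
  assert (HM : IZR (2 * j + 1 - 2 * Q * z) = (d - IZR z) * (2 * IZR Q)).
  { rewrite minus_IZR, <- Heq, !mult_IZR. simpl (IZR 2). ring. }
  assert (HQr : 0 < IZR Q) by (apply IZR_lt; lia).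
  assert (A1 : 0 <= IZR (2 * j + 1 - 2 * Q * z)) by (rewrite HM; nra).
  assert (A2 : IZR (2 * j + 1 - 2 * Q * z) < IZR (2 * Q)) by (rewrite HM, mult_IZR; nra).
  apply le_IZR in A1. apply lt_IZR in A2.
  assert (B1 : (1 <= 2 * j + 1 - 2 * Q * z)%Z) by nia.
  assert (B2 : (2 * j + 1 - 2 * Q * z <= 2 * Q - 1)%Z) by nia.
  apply IZR_le in B1. apply IZR_le in B2. rewrite HM in B1, B2.
  rewrite minus_IZR, mult_IZR in B2. simpl (IZR 2) in *.
  assert (Hinv : / (2 * IZR Q) * (2 * IZR Q) = 1) by (field; lra).
  apply Rmin_glb.
  - apply Rmult_le_reg_r with (2 * IZR Q); [lra|]. rewrite Hinv. lra.
  - apply Rmult_le_reg_r with (2 * IZR Q); [lra|]. rewrite Hinv. nra.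
Qed.

Lemma rat_pos r : is_rational r -> exists P Q : Z, (0<Q)%Z /\ r = IZR P / IZR Q.
Proof.
  intros [p [q [Hq ->]]]. exists (p*q)%Z, (q*q)%Z. split; [nia|].
  rewrite !mult_IZR. field. apply IZR_neq; auto.
Qed.

Lemma far x P Q k m : (0 < Q)%Z ->
  / (2 * IZR Q) <= cdist (x + IZR k * (IZR P / IZR Q) + IZR m) (x + / (2 * IZR Q)).
Proof.
  intros HQ. apply cdist_ge with (j := (k * P + m * Q - 1)%Z); auto.
  assert (IZR Q <> 0) by (apply IZR_neq; lia).
  rewrite plus_IZR, mult_IZR, minus_IZR, plus_IZR, !mult_IZR. simpl (IZR 2). field. auto.
Qed.

Lemma iter_hutch a b S x0 n y :
  (forall v, S v -> circ_eq v x0) ->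
  Nat.iter n (hutch (fam a b)) S y ->
  exists k m : Z, y = x0 + INR n * a + IZR k * (b - a) + IZR m.
Proof.
  intros HS. revert y. induction n; intros y Hy.
  - destruct (HS y Hy) as [m Hm]. exists 0%Z, m. simpl. lra.
  - simpl in Hy. destruct Hy as [s [v [Hv [m' Hm']]]].
    destruct (IHn v Hv) as [k [m ->]]. rewrite S_INR.
    destruct s; simpl in Hm'; unfold rot in Hm'.
    + exists k, (m + m')%Z. rewrite plus_IZR. lra.
    + exists (k + 1)%Z, (m + m')%Z. rewrite !plus_IZR. simpl (IZR 1). lra.
Qed.

Lemma part2 a b : is_rational (b - a) -> ~ strict_attractor (fam a b).
Proof.
  intros Hr H. destruct (rat_pos _ Hr) as [P [Q [HQ HPQ]]].
  set (S := fun v => circ_eq v 0).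
  assert (HQr : 0 < IZR Q) by (apply IZR_lt; lia).
  destruct (H S) with (eps := / (2 * IZR Q)) as [N HN].
  - intros v k [m ->]. exists (m + k)%Z. rewrite plus_IZR. lra.
  - exists 0. exists 0%Z. lra.
  - intros u Hu. exists (fun n => n), 0. split; [intros; lia|]. split.
    + exists 0%Z. lra.
    + intros eps He. exists 0%nat. intros n _. destruct (Hu n) as [k Hk].
      eapply Rle_lt_trans. apply (cdist_le _ _ k). rewrite Hk.
      replace (0 + IZR k - 0 - IZR k) with 0 by ring. rewrite Rabs_R0. auto.
  - apply Rinv_0_lt_compat. lra.
  - destruct (HN N (le_n _)) as [_ H2].
    destruct (H2 (INR N * a + / (2 * IZR Q)) I) as [v [Hv Hd]].
    destruct (iter_hutch a b S 0 N v (fun v h => h) Hv) as [k [m ->]].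
    rewrite HPQ in Hd.
    pose proof (far (INR N * a) P Q k m HQ).
    replace (0 + INR N * a + IZR k * (IZR P / IZR Q) + IZR m) with
      (INR N * a + IZR k * (IZR P / IZR Q) + IZR m) in Hd by ring.
    lra.
Qed.

Lemma iter_Phi_inv a b n p : exists k : Z,
  snd (Nat.iter n (Phi_inv a b) p) = snd p - INR n * a - IZR k * (b - a).
Proof.
  induction n.
  - exists 0%Z. simpl. ring.
  - destruct IHn as [k Hk]. simpl Nat.iter. unfold Phi_inv at 1. simpl snd.
    rewrite S_INR. destruct (fst (Nat.iter n (Phi_inv a b) p) (-1)%Z); simpl; unfold rot; rewrite Hk.
    + exists k. ring.
    + exists (k+1)%Z. rewrite plus_IZR. simpl (IZR 1). ring.
Qed.

Lemma iter_Phi a b n p : exists k : Z,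
  snd (Nat.iter n (Phi a b) p) = snd p + INR n * a + IZR k * (b - a).
Proof.
  induction n.
  - exists 0%Z. simpl. ring.
  - destruct IHn as [k Hk]. simpl Nat.iter. unfold Phi at 1. simpl snd.
    rewrite S_INR. destruct (fst (Nat.iter n (Phi a b) p) 0%Z); simpl; unfold rot; rewrite Hk.
    + exists k. ring.
    + exists (k+1)%Z. rewrite plus_IZR. simpl (IZR 1). ring.
Qed.

Lemma part3 a b : is_rational (b - a) -> forall nu : R, 0 < nu < 1 -> ~ uu_minimal nu a b.
Proof.
  intros Hr nu _ H. destruct (rat_pos _ Hr) as [P [Q [HQ HPQ]]].
  assert (HQr : 0 < IZR Q) by (apply IZR_lt; lia).
  set (w0 := fun _ : Z => one).
  destruct (H (w0, 0) w0 (0 + / (2 * IZR Q)) (/ (2 * IZR Q))) as [q [Hq [_ Hd]]].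
  { apply Rinv_0_lt_compat. lra. }
  destruct Hq as [n [w' [_ ->]]].
  destruct (iter_Phi_inv a b n (w0, 0)) as [k1 Hk1].
  destruct (iter_Phi a b n (w', snd (Nat.iter n (Phi_inv a b) (w0, 0)))) as [k2 Hk2].
  rewrite Hk2 in Hd. simpl snd in Hd. rewrite Hk1 in Hd. simpl snd in Hd.
  rewrite HPQ in Hd.
  pose proof (far 0 P Q (k2 - k1) 0 HQ).
  rewrite minus_IZR in H0.
  replace (0 - INR n * a - IZR k1 * (IZR P / IZR Q) + INR n * a + IZR k2 * (IZR P / IZR Q))
    with (0 + (IZR k2 - IZR k1) * (IZR P / IZR Q) + IZR 0) in Hd by (simpl; ring).
  lra.
Qed.

Lemma dirichlet a (Hirr : ~ is_rational a) K : (0 < K)%nat ->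
  exists (n : nat) (M : Z), (1 <= n)%nat /\ 0 < Rabs (INR n * a - IZR M) < / INR K.
Proof.
  intros HK.
  assert (HKr : 0 < INR K) by (apply lt_0_INR; lia).
  set (t := fun i : nat => INR i * a - IZR (Int_part (INR i * a))).
  assert (Ht : forall i, 0 <= t i < 1).
  { intro i. unfold t. destruct (IP_spec (INR i * a)). lra. }
  set (z := fun i => Int_part (INR K * t i)).
  assert (Hz : forall i, (0 <= z i < Z.of_nat K)%Z).
  { intro i. unfold z. destruct (IP_spec (INR K * t i)) as [H1 H2].
    specialize (Ht i). split.
    - assert (0 <= INR K * t i) by nra.
      assert (-1 < z i)%Z by (apply lt_IZR; unfold z; simpl (IZR (-1)); lra). unfold z in *; lia.
    - apply lt_IZR. rewrite <- INR_IZR_INZ. nra. }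
  set (b := fun i => Z.to_nat (z i)).
  assert (Hpig : exists i j, (i < j <= K)%nat /\ b i = b j).
  { apply NNPP. intro Hn.
    assert (HND : NoDup (map b (seq 0 (S K)))).
    { apply NoDup_map_NoDup_ForallPairs; [|apply seq_NoDup].
      intros i j Hi Hj Hb. apply in_seq in Hi. apply in_seq in Hj.
      destruct (Nat.lt_trichotomy i j) as [Hl|[Hl|Hl]]; auto.
      - exfalso. apply Hn. exists i, j. split; [lia|auto].
      - exfalso. apply Hn. exists j, i. split; [lia|auto]. }
    assert (Hinc : incl (map b (seq 0 (S K))) (seq 0 K)).
    { intros c Hc. apply in_map_iff in Hc. destruct Hc as [i [<- _]].
      apply in_seq. specialize (Hz i). unfold b. lia. }
    pose proof (NoDup_incl_length HND Hinc). rewrite length_map, !length_seq in H. lia. }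
  destruct Hpig as [i [j [Hij Hb]]].
  assert (Hzz : z i = z j).
  { unfold b in Hb. pose proof (Hz i). pose proof (Hz j). lia. }
  assert (Hd : Rabs (t j - t i) < / INR K).
  { destruct (IP_spec (INR K * t i)). destruct (IP_spec (INR K * t j)).
    fold (z i) in *. fold (z j) in *. rewrite Hzz in *.
    apply Rmult_lt_reg_l with (INR K); auto. rewrite Rinv_r by lra.
    rewrite <- (Rabs_right (INR K)) at 1 by lra. rewrite <- Rabs_mult.
    apply Rabs_def1; nra. }
  exists (j - i)%nat, (Int_part (INR j * a) - Int_part (INR i * a))%Z.
  assert (Heq : INR (j - i) * a - IZR (Int_part (INR j * a) - Int_part (INR i * a)) = t j - t i).
  { unfold t. rewrite minus_INR by lia. rewrite minus_IZR. ring. }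
  rewrite Heq. split; [lia|]. split; auto.
  apply Rabs_pos_lt. intro H0. apply Hirr.
  exists (Int_part (INR j * a) - Int_part (INR i * a))%Z, (Z.of_nat (j - i)).
  assert (Hnz : INR (j - i) <> 0) by (apply not_0_INR; lia).
  split; [lia|]. rewrite <- INR_IZR_INZ. rewrite <- Heq in H0.
  field_simplify_eq; [|auto]. lra.
Qed.

Lemma word_ones a b n x : word_apply (fam a b) (repeat one n) x = x + INR n * a.
Proof.
  induction n; simpl. - ring.
  - rewrite IHn. unfold rot. destruct n; simpl; ring.
Qed.

Lemma approx d T : d <> 0 -> 1 < T / d -> exists k : Z, (1 <= k)%Z /\ Rabs (IZR k * d - T) < Rabs d.
Proof.
  intros Hd H. exists (Int_part (T / d)). destruct (IP_spec (T / d)) as [H1 H2]. split.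
  - assert (0 < Int_part (T/d))%Z by (apply lt_IZR; simpl; lra). lia.
  - replace (IZR (Int_part (T / d)) * d - T) with ((IZR (Int_part (T / d)) - T/d) * d) by (field; auto).
    rewrite Rabs_mult. pose proof (Rabs_pos_lt d Hd).
    assert (Rabs (IZR (Int_part (T / d)) - T / d) < 1) by (apply Rabs_def1; lra). nra.
Qed.

Lemma gt1 d T : (0 < d /\ d < T) \/ (d < 0 /\ T < d) -> 1 < T / d.
Proof.
  intros [[H1 H2]|[H1 H2]].
  - assert (0 < (T - d) * / d) by (apply Rmult_lt_0_compat; [lra| apply Rinv_0_lt_compat; lra]).
    replace ((T - d) * / d) with (T / d - 1) in H by (field; lra). lra.
  - assert (0 < (d - T) * - / d).
    { apply Rmult_lt_0_compat; [lra|]. pose proof (Rinv_lt_0_compat d H1). lra. }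
    replace ((d - T) * - / d) with (T / d - 1) in H by (field; lra). lra.
Qed.

Lemma part1 a b : ~ is_rational a -> IFS_minimal (fam a b).
Proof.
  intros Hirr x y eps He.
  set (e := Rmin eps 1).
  assert (He0 : 0 < e) by (unfold e; apply Rmin_glb_lt; lra).
  destruct (archimed_cor1 e He0) as [K [HK1 HK2]].
  destruct (dirichlet a Hirr K HK2) as [n [M [Hn [Hd1 Hd2]]]].
  set (d := INR n * a - IZR M) in *.
  assert (Hdne : d <> 0) by (intro H0; rewrite H0, Rabs_R0 in Hd1; lra).
  assert (Hde : Rabs d < e) by lra.
  assert (He1 : e <= 1) by apply Rmin_r. assert (He2 : e <= eps) by apply Rmin_l.
  set (z0 := Int_part (y - x)). destruct (IP_spec (y - x)) as [Hz1 Hz2]. fold z0 in Hz1, Hz2.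
  assert (Hc : exists c : Z, (0 < d /\ d < y - x - IZR z0 + IZR c) \/ (d < 0 /\ y - x - IZR z0 + IZR c < d)).
  { destruct (Rlt_or_le 0 d) as [Hp|Hp].
    - exists 1%Z. left. rewrite Rabs_right in Hde by lra. simpl. lra.
    - exists (-2)%Z. right. rewrite Rabs_left1 in Hde by lra. simpl. lra. }
  destruct Hc as [c Hc].
  destruct (approx d (y - x - IZR z0 + IZR c) Hdne (gt1 _ _ Hc)) as [k [Hk1 Hk2]].
  exists (word_apply (fam a b) (repeat one (n * Z.to_nat k)) x). split.
  - exists (repeat one (n * Z.to_nat k)). split; auto.
    destruct (n * Z.to_nat k)%nat eqn:E; [lia|]. simpl. congruence.
  - eapply Rle_lt_trans. apply (cdist_le _ _ (k * M + c - z0)).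
    rewrite word_ones, mult_INR, (INR_IZR_INZ (Z.to_nat k)), Z2Nat.id by lia.
    replace (x + INR n * IZR k * a - y - IZR (k * M + c - z0)) with
      (IZR k * d - (y - x - IZR z0 + IZR c)).
    + lra.
    + unfold d. rewrite minus_IZR, plus_IZR, mult_IZR. ring.
Qed.

Theorem mainTheorem19 (alpha beta : R) :
  ~ is_rational alpha -> ~ is_rational beta -> is_rational (beta - alpha) ->
  IFS_minimal (fam alpha beta) /\
  ~ strict_attractor (fam alpha beta) /\
  (forall nu : R, 0 < nu < 1 -> ~ uu_minimal nu alpha beta).
Proof.
  intros Ha _ Hr. split; [apply part1; auto|]. split; [apply part2; auto|].
  apply part3; auto.
Qed.
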